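(* For every integer $k\ge1$ and $\tau\in T$: if $\mathfrak{h}_s(\tau)=k$ then $\rho(\tau)\ge k-\frac12$; if $\mathfrak{r}_s(\tau)=k$ then $\rho(\tau)\ge\frac32k-1$; if $\mathfrak{d}_s(\tau)=k$ then $\rho(\tau)\ge\frac34 2^k-1$. The same holds for $u\in U_f$ with $\mathfrak{h}_s',\mathfrak{r}_s',\mathfrak{d}_s'$ in place of $\mathfrak{h}_s,\mathfrak{r}_s,\mathfrak{d}_s$.
   Context: Let $m\ge0$. $T$: the empty tree $\emptyset$ and all $\tau=[\tau_1,\dots,\tau_\kappa]_l$ with $l\in\{0,\dots,m\}$, $\kappa\ge0$, $\tau_j\in T\setminus\{\emptyset\}$ unordered (new root of color $l$ joined to roots of the $\tau_j$; $\bullet_l$ if $\kappa=0$). Order: $\rho(\emptyset)=0$, $\rho([\tau_1,\dots,\tau_\kappa]_l)=\sum_j\rho(\tau_j)+1$ if $l=0$, $+\frac12$ if $l\ge1$. $U_f$: trees $u=[\tau_1,\dots,\tau_\kappa]_f$, $\kappa\ge0$, $\tau_j\in T\setminus\{\emptyset\}$, $\rho(u)=\sum_j\rho(\tau_j)$, $\mathfrak{g}'(u)=\max_j\mathfrak{g}(\tau_j)$. Maxima over empty sets are $0$. $\mathfrak{h}_s(\emptyset)=0$, $\mathfrak{h}_s([\tau_1,\dots,\tau_\kappa]_l)=1$ if $l>0$, $=1+\max_j\mathfrak{h}_s(\tau_j)$ if $l=0$. $\mathfrak{r}_s(\emptyset)=0$, $\mathfrak{r}_s(\bullet_l)=1$;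 for $\tau=[\tau_1,\dots,\tau_\kappa]_l$: $1$ if $l>0$; $\mathfrak{r}_s(\tau_1)$ if $l=0,\kappa=1$; $1+\max_j\mathfrak{r}_s(\tau_j)$ if $l=0,\kappa\ge2$. $\mathfrak{d}_s(\emptyset)=0$, $\mathfrak{d}_s(\bullet_l)=1$; for $\tau=[\tau_1,\dots,\tau_\kappa]_l$: $1$ if $l>0$; with $M=\max_j\mathfrak{d}_s(\tau_j)$, $M$ if $l=0$ and exactly one $i$ has $\mathfrak{d}_s(\tau_i)=M$, and $M+1$ if $l=0$ and at least two indices attain $M$. *)

(* Defs.v *)
From mathcomp Require Import all_boot all_order all_algebra.
Set Implicit Arguments. Unset Strict Implicit. Unset Printing Implicit Defensive.
Import Order.TTheory GRing.Theory Num.Theory.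

(* Non-empty colored rooted trees: [t_1,...,t_k]_l is [Node l [:: t_1; ...; t_k]].
   Children are stored in a list; all functions below are symmetric in the
   children, so the order is irrelevant (trees are unordered). *)
Inductive ntree : Type := Node : nat -> seq ntree -> ntree.

(* T = option ntree, with None = the empty tree. *)
Definition tree := option ntree.

Fixpoint ncolored (m : nat) (t : ntree) : bool :=
  match t with Node l ts => (l <= m) && all (ncolored m) ts end.
Definition colored (m : nat) (t : tree) : bool :=
  if t is Some t' then ncolored m t' else true.

Local Open Scope ring_scope.
Fixpoint nrho (t : ntree) : rat :=
  match t with Node l ts =>
    foldr (fun x acc => x + acc) 0 (map nrho ts) + (if l == 0%N then 1 else 1/2)
  end.
Definition rho (t : tree) : rat := if t is Some t' then nrho t' else 0.
Local Close Scope ring_scope.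

Definition maxs (s : seq nat) : nat := foldr maxn 0 s.

Fixpoint nh (t : ntree) : nat :=
  match t with Node l ts => if l == 0 then (maxs (map nh ts)).+1 else 1 end.
Definition h_s (t : tree) : nat := if t is Some t' then nh t' else 0.

Fixpoint nr (t : ntree) : nat :=
  match t with Node l ts =>
    if l != 0 then 1 else
    match ts with
    | [::] => 1
    | [:: t1] => nr t1
    | _ => (maxs (map nr ts)).+1
    end
  end.
Definition r_s (t : tree) : nat := if t is Some t' then nr t' else 0.

Fixpoint nd (t : ntree) : nat :=
  match t with Node l ts =>
    if l != 0 then 1 else
    if ts is [::] then 1 else
    let ds := map nd ts in
    let M := maxs ds in
    if 2 <= count (pred1 M) ds then M.+1 else M
  end.
Definition d_s (t : tree) : nat := if t is Some t' then nd t' else 0.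

(* U_f: u = [t_1,...,t_k]_f with non-empty t_j, represented by its list of children *)
Definition utree := seq ntree.
Definition ucolored (m : nat) (u : utree) : bool := all (ncolored m) u.
Definition urho (u : utree) : rat :=
  foldr (fun x acc => (x + acc)%R) 0%R (map nrho u).
Definition h_s' (u : utree) : nat := maxs (map nh u).
Definition r_s' (u : utree) : nat := maxs (map nr u).
Definition d_s' (u : utree) : nat := maxs (map nd u).

(* Main.v *)
Require Import Defs.
From mathcomp Require Import all_boot all_order all_algebra.
From mathcomp Require Import lra zify.
From Stdlib Require Import Lia.
Import Order.TTheory GRing.Theory Num.Theory.
Local Open Scope ring_scope.

Section Ind.
Variable P : ntree -> Prop.
Hypothesis H : forall l ts, (forall t, List.In t ts -> P t) -> P (Node l ts).
Fixpoint ntree_ind' (t : ntree) : P t :=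
  match t with Node l ts => H l ts
   ((fix F (ts : seq ntree) : forall t, List.In t ts -> P t :=
      match ts with
      | [::] => fun t (hin : List.In t [::]) => match hin with end
      | x :: xs => fun t hin => match hin with
                   | or_introl e => eq_ind x P (ntree_ind' x) t e
                   | or_intror h => F xs t h end
      end) ts) end.
End Ind.

Definition S (ts : seq ntree) : rat := foldr (fun x acc => x + acc) 0 (map nrho ts).

Lemma nrhoE l ts : nrho (Node l ts) = S ts + (if l == 0%N then 1 else 1/2).
Proof. by []. Qed.

Lemma S_cons x ts : S (x :: ts) = nrho x + S ts.
Proof. by []. Qed.

Lemma nrho_ge t : 1/2 <= nrho t.
Proof.
elim/ntree_ind': t => l ts IH.
have : 0 <= S ts.
  elim: ts IH => [|x xs IHx] IH /=; first by [].
  have := IH x (or_introl erefl). have := IHx (fun t h => IH t (or_intror h)).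
  rewrite /S /=. lra.
rewrite nrhoE; case: (l == 0%N); lra.
Qed.

Lemma S_ge0 ts : 0 <= S ts.
Proof. elim: ts => [|x xs IH] //; rewrite S_cons; have := nrho_ge x; lra. Qed.

Lemma S_in t ts : List.In t ts -> nrho t <= S ts.
Proof.
elim: ts => [|x xs IH] //= [->|h]; rewrite S_cons.
  have := S_ge0 xs; lra.
have := IH h; have := nrho_ge x; lra.
Qed.

Arguments S_in {t ts}.
Lemma S_in2 t ts : List.In t ts -> (2 <= size ts)%N -> nrho t + 1/2 <= S ts.
Proof.
case: ts => [|x xs] //= [->|h] hs; rewrite S_cons.
  case: xs hs => [|y ys] // _; rewrite S_cons; have := nrho_ge y; have := S_ge0 ys; lra.
have := S_in h; have := nrho_ge x; lra.
Qed.

Lemma count1 (M : nat) ts : (0 < count (pred1 M) (map nd ts))%N ->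
  exists b, List.In b ts /\ nd b = M.
Proof.
elim: ts => [|x xs IH] //=.
case: eqP => /= [ex|nx] h; first by exists x; split; [left|].
have [b [hb eb]] := IH h; exists b; split => //; by right.
Qed.

Lemma maxs_in (f : ntree -> nat) ts : ts <> [::] ->
  exists t, List.In t ts /\ f t = maxs (map f ts).
Proof.
elim: ts => [|x xs IH] // _.
case: xs IH => [|y ys] IH.
  by exists x; split; [left | rewrite /= maxn0].
have [t [ht e]] := IH ltac:(discriminate).
have -> : maxs (map f [:: x, y & ys]) = maxn (f x) (maxs (map f (y :: ys))) by [].
rewrite -e.
case: (leqP (f x) (f t)) => h.
  exists t; split; first by right. by [].
exists x; split; first by left. by [].
Qed.

Lemma maxs_ge (f : ntree -> nat) t ts : List.In t ts -> (f t <= maxs (map f ts))%N.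
Proof.
elim: ts => [|x xs IH] //= [->|h]; first by rewrite leq_maxl.
by rewrite (leq_trans (IH h)) // leq_maxr.
Qed.

Lemma count2 (M : nat) ts : (2 <= count (pred1 M) (map nd ts))%N ->
  exists a b, [/\ List.In a ts, List.In b ts, nd a = M, nd b = M & nrho a + nrho b <= S ts].
Proof.
elim: ts => [|x xs IH] //=.
case: eqP => /= [ex|nx] h.
  have h1 : (0 < count (pred1 M) (map nd xs))%N by move: h; rewrite /= add1n ltnS.
  have [b [hb eb]] := count1 _ _ h1.
  exists x, b; split => //; [by left | by right |].
  rewrite S_cons; have := S_in hb; lra.
have [a [b [ha hb ea eb hab]]] := IH h.
exists a, b; split => //; [by right | by right |]; rewrite S_cons; have := nrho_ge x; lra.
Qed.

Lemma natS (n : nat) : (n.+1)%:R = n%:R + 1 :> rat.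
Proof. by rewrite -addn1 natrD. Qed.

Lemma h_bound t : (nh t)%:R - 1/2 <= nrho t.
Proof.
elim/ntree_ind': t => l ts IH; rewrite nrhoE /=.
case: (eqVneq l 0%N) => [_|nl] /=; last first.
  have := S_ge0 ts; lra.
case: ts IH => [|x xs] IH; first by rewrite /S /=; lra.
have [t0 [h0 e0]] := @maxs_in nh (x :: xs) ltac:(discriminate).
rewrite natS -e0; have := IH t0 h0; have := S_in h0; lra.
Qed.

Lemma r_bound t : 3/2 * (nr t)%:R - 1 <= nrho t.
Proof.
elim/ntree_ind': t => l ts IH; rewrite nrhoE /=.
case: (eqVneq l 0%N) => [_|nl] /=; last first.
  have := S_ge0 ts; lra.
case: ts IH => [|x [|y ys]] IH; first by rewrite /S /=; lra.
  have := IH x (or_introl erefl); rewrite /S /=; lra.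
have [t0 [h0 e0]] := @maxs_in nr [:: x, y & ys] ltac:(discriminate).
rewrite natS -e0; have := IH t0 h0; have := S_in2 _ _ h0 isT; lra.
Qed.

Lemma d_bound t : 3/4 * 2 ^+ (nd t) - 1 <= nrho t.
Proof.
elim/ntree_ind': t => l ts IH; rewrite nrhoE /=.
case: (eqVneq l 0%N) => [_|nl] /=; last first.
  have := S_ge0 ts; lra.
case: ts IH => [|x xs] IH; first by rewrite /S /=; lra.
case: ifP => hc.
  have [a [b [ha hb ea eb hab]]] := count2 _ _ hc.
  have := IH a ha; have := IH b hb; rewrite ea eb exprS; lra.
have [t0 [h0 e0]] := @maxs_in nd (x :: xs) ltac:(discriminate).
rewrite -e0; have := IH t0 h0; have := S_in h0; lra.
Qed.

Lemma ubound (f : ntree -> nat) (g : nat -> rat) (u : utree) (k : nat) :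
  (1 <= k)%N -> (forall t, g (f t) <= nrho t) -> maxs (map f u) = k -> g k <= urho u.
Proof.
move=> hk hg e.
have hu : u <> [::] by move=> h; move: e hk; rewrite h /= => <-.
have [t0 [h0 e0]] := maxs_in f _ hu.
rewrite -e -e0; apply: le_trans (hg t0) _; exact: S_in h0.
Qed.

Theorem mainTheorem9 (m k : nat) : (1 <= k)%N ->
  (forall t : tree, colored m t ->
     [/\ h_s t = k -> k%:R - 1/2 <= rho t,
         r_s t = k -> 3/2 * k%:R - 1 <= rho t
       & d_s t = k -> 3/4 * 2 ^+ k - 1 <= rho t]) /\
  (forall u : utree, ucolored m u ->
     [/\ h_s' u = k -> k%:R - 1/2 <= urho u,
         r_s' u = k -> 3/2 * k%:R - 1 <= urho u
       & d_s' u = k -> 3/4 * 2 ^+ k - 1 <= urho u]).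
Proof.
move=> hk; split.
  case => [t|] _ /=; last by split => e; move: hk; rewrite -e.
  split => <-; [exact: h_bound | exact: r_bound | exact: d_bound].
move=> u _; split => e.
- exact: (@ubound nh (fun n => n%:R - 1/2) u k hk h_bound e).
- exact: (@ubound nr (fun n => 3/2 * n%:R - 1) u k hk r_bound e).
- exact: (@ubound nd (fun n => 3/4 * 2 ^+ n - 1) u k hk d_bound e).
Qed.
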